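(* Let $\mathcal{D}(n,k,d)$ be a distributed storage system with node storage capacity $\alpha$ and repair bandwidth $\gamma=d\beta$, in the presence of a passive eavesdropper who can observe any $\ell<k$ storage nodes. Then its secrecy capacity satisfies \[ C_s(\alpha,\gamma)\le \sum_{i=\ell+1}^{k}\min\{(d-i+1)\beta,\ \alpha\}. \]
   Context: A distributed storage system (DSS) $\mathcal{D}(n,k,d)$, $k\le d\le n-1$: a source holds a file, modeled as a random variable $S$ uniform over $\mathbb{F}_q^R$ (so $H(S)=R$, entropy in base $q$), which is encoded and stored on $n$ storage nodes $v_1,\dots,v_n$, each storing at most $\alpha$ symbols of $\mathbb{F}_q$. Nodes fail one at a time; the $i$-th failed node is replaced by a new node $v_{n+i}$ that connects to some $d$ of the remaining $n-1$ active nodes and downloads $\beta=\gamma/d$ symbols from each (symmetric repair; $\gamma$ is the repair bandwidth), then stores at most $\alpha$ symbols computed from the downloaded data. The system must always have $n$ active nodes. For a node $v_i$, $D_i$ denotes all the data it downloads when joining (for the initial nodes, the data it receives from the source) and $C_i$ the data it stores. Reconstruction property: for every failure/repair sequence and every set $B$ of $k$ simultaneously active nodes, $H(S\mid C_B)=0$ where $C_B=\{C_i: v_i\in B\}$. A passive eavesdropper may choose any set $E$ of at most $\ell$ nodes among all nodes ever in the system $v_1,v_2,\dots$ (possibly at different times) and observes $D_E=\{D_i:v_i\in E\}$ (i.e., all data downloaded by those nodes, in addition to what they store); she cannot modify data. Perfect secrecy: $H(S\mid D_E)=H(S)$ for all such $E$ with $|E|\le \ell$. The storage and repair schemes are known to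 everyone. The secrecy capacity $C_s(\alpha,\gamma)$ is the supremum of $H(S)$ over all storage and repair schemes satisfying both the reconstruction property and perfect secrecy for all data collectors and all eavesdropping sets. *)

(* Defs.v *)
From HB Require Import structures.
From mathcomp Require Import all_boot all_order all_algebra all_field.
From Stdlib Require Import Reals.

Set Implicit Arguments.
Unset Strict Implicit.
Unset Printing Implicit Defensive.

Local Open Scope R_scope.

Definition prob (Om : finType) (P : Om -> R) (U : eqType) (X : Om -> U) (x : U) : R :=
  \big[Rplus/0]_(w : Om | X w == x) P w.

(* Entropy in base q:  H(X) = - sum_w P(w) log_q Pr[X = X(w)]
   (= - sum_x Pr[X=x] log_q Pr[X=x], summing over the support). *)
Definition entropy (q : R) (Om : finType) (P : Om -> R) (U : eqType) (X : Om -> U) : R :=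
  - \big[Rplus/0]_(w : Om) (P w * (ln (prob P X (X w)) / ln q)).

Definition pairRV (Om : Type) (U V : Type) (X : Om -> U) (Y : Om -> V) : Om -> U * V :=
  fun w => (X w, Y w).

Definition cond_entropy (q : R) (Om : finType) (P : Om -> R) (U V : eqType)
    (X : Om -> U) (Y : Om -> V) : R :=
  entropy q P (pairRV X Y) - entropy q P Y.

(* A repair event: (index of the failed node, list of the d helper nodes).
   Nodes are numbered 0,1,2,...: nodes 0..n-1 are the initial nodes and the
   newcomer created by the t-th repair (t = 0,1,...) is node n + t. *)
Definition event := (nat * seq nat)%type.

Definition dflt_event : event := (0%nat, [::]).

Fixpoint active_from (n : nat) (A : seq nat) (t : nat) (h : seq event) : seq nat :=
  match h with
  | [::] => A
  | e :: h' => active_from n (rcons (filter (fun j => j != e.1) A) (n + t)%nat) t.+1 h'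
  end.

Definition active (n : nat) (h : seq event) : seq nat := active_from n (iota 0 n) 0 h.

Definition valid_event (d : nat) (A : seq nat) (e : event) : bool :=
  [&& e.1 \in A, uniq e.2, size e.2 == d, all (fun j => j \in A) e.2 & e.1 \notin e.2].

Fixpoint valid_from (n d : nat) (A : seq nat) (t : nat) (h : seq event) : bool :=
  match h with
  | [::] => true
  | e :: h' => valid_event d A e &&
               valid_from n d (rcons (filter (fun j => j != e.1) A) (n + t)%nat) t.+1 h'
  end.

Definition valid_history (n d : nat) (h : seq event) : bool :=
  valid_from n d (iota 0 n) 0 h.

(* All data are random variables on a common finite probability space.
   - S : the file, a vector in F^Rf;
   - Dinit i / Cinit i : data sent by the source to / stored by initial node i;
   - msg h e j : data sent by helper j to the newcomer created by event e,
     after the history h of previous repairs;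
   - Cnew h e : data stored by that newcomer. *)
Record scheme (F : finFieldType) := Scheme {
  Om : finType;
  P : Om -> R;
  Rf : nat;
  S : Om -> 'rV[F]_Rf;
  Dinit : nat -> Om -> seq F;
  Cinit : nat -> Om -> seq F;
  msg : seq event -> event -> nat -> Om -> seq F;
  Cnew : seq event -> event -> Om -> seq F
}.

Arguments Om {F} s.
Arguments P {F} s _.
Arguments Rf {F} s.
Arguments S {F} s _.
Arguments Dinit {F} s _ _.
Arguments Cinit {F} s _ _.
Arguments msg {F} s _ _ _ _.
Arguments Cnew {F} s _ _ _.

Section Nodes.
Variables (F : finFieldType) (n : nat) (sc : scheme F).

(* Stored data C_i of node i in the system evolved along history h
   (meaningful for i < n + size h). *)
Definition Cnode (h : seq event) (i : nat) : Om sc -> seq F :=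
  if ltn i n then Cinit sc i
  else Cnew sc (take (i - n) h) (nth dflt_event h (i - n)).

Definition Dnode (h : seq event) (i : nat) : Om sc -> seq (seq F) :=
  if ltn i n then (fun w => [:: Dinit sc i w])
  else let p := take (i - n) h in
       let e := nth dflt_event h (i - n) in
       (fun w => [seq msg sc p e j w | j <- e.2]).

Definition Cset (h : seq event) (B : seq nat) : Om sc -> seq (seq F) :=
  fun w => [seq Cnode h i w | i <- B].

Definition Dset (h : seq event) (E : seq nat) : Om sc -> seq (seq (seq F)) :=
  fun w => [seq Dnode h i w | i <- E].

End Nodes.

Arguments Cnode {F} n sc h i _.
Arguments Dnode {F} n sc h i _.
Arguments Cset {F} n sc h B _.
Arguments Dset {F} n sc h E _.

Definition secure_dss (F : finFieldType) (n k d l : nat) (alpha beta : R)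
    (sc : scheme F) : Prop :=
  let q := INR #|F| in
  let Pr := P sc in
  (forall w, 0 <= Pr w) /\ \big[Rplus/0]_(w : Om sc) Pr w = 1 /\
  (forall s : 'rV[F]_(Rf sc), prob Pr (S sc) s = / (q ^ Rf sc)) /\
  (forall i, ltn i n ->
     entropy q Pr (Cinit sc i) <= alpha /\
     cond_entropy q Pr (Cinit sc i) (Dinit sc i) = 0) /\
  (forall h e, valid_history n d (rcons h e) ->
     (forall j, j \in e.2 ->
        entropy q Pr (msg sc h e j) <= beta /\
        cond_entropy q Pr (msg sc h e j) (Cnode n sc h j) = 0) /\
     entropy q Pr (Cnew sc h e) <= alpha /\
     cond_entropy q Pr (Cnew sc h e) (Dnode n sc (rcons h e) (n + size h)) = 0) /\
  (forall h B, valid_history n d h -> uniq B -> size B = k ->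
     all (fun i => i \in active n h) B ->
     cond_entropy q Pr (S sc) (Cset n sc h B) = 0) /\
  (forall h E, valid_history n d h -> leq (size E) l ->
     all (fun i => ltn i (n + size h)%nat) E ->
     cond_entropy q Pr (S sc) (Dset n sc h E) = entropy q Pr (S sc)).

Definition secrecy_bound (k d l : nat) (alpha beta : R) : R :=
  \big[Rplus/0]_(l.+1 <= i < k.+1) Rmin (INR (d - i + 1) * beta) alpha.

(* Main.v *)
Require Import Defs.
From HB Require Import structures.
From mathcomp Require Import all_boot all_order all_algebra all_field.
From Stdlib Require Import Reals Lra.
Local Open Scope R_scope.
Set Implicit Arguments.
Unset Strict Implicit.
Lemma RplusA : associative Rplus. Proof. by move=> x y z; rewrite Rplus_assoc. Qed.
Lemma RmultA : associative Rmult. Proof. by move=> x y z; rewrite Rmult_assoc. Qed.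
HB.instance Definition _ := Monoid.isComLaw.Build R 0 Rplus RplusA Rplus_comm Rplus_0_l.
HB.instance Definition _ := Monoid.isComLaw.Build R 1 Rmult RmultA Rmult_comm Rmult_1_l.
HB.instance Definition _ := Monoid.isMulLaw.Build R 0 Rmult Rmult_0_l Rmult_0_r.
HB.instance Definition _ := Monoid.isAddLaw.Build R Rmult Rplus Rmult_plus_distr_r Rmult_plus_distr_l.

Lemma sumR_ge0 (I : finType) (F : I -> R) : (forall i, 0 <= F i) -> 0 <= \big[Rplus/0]_(i : I) F i.
Proof. move=> H; apply: (big_ind (fun x => 0 <= x)) => //; [lra | move=> x y; lra]. Qed.

Lemma sumR_le (I : finType) (F G : I -> R) : (forall i, F i <= G i) ->
  \big[Rplus/0]_(i : I) F i <= \big[Rplus/0]_(i : I) G i.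
Proof. move=> H; apply: (big_ind2 (fun x y => x <= y)) => //; [lra | move=> *; lra]. Qed.

Lemma sumR_N (I : finType) (F : I -> R) : \big[Rplus/0]_(i : I) (- F i) = - \big[Rplus/0]_(i : I) F i.
Proof. symmetry; apply: (big_morph Ropp) => [x y|]; lra. Qed.

Lemma ln_le_sub1 x : 0 < x -> ln x <= x - 1.
Proof. move=> hx; have := exp_ineq1_le (ln x); rewrite exp_ln //; lra. Qed.

Lemma ln_le_mono x y : 0 < x -> x <= y -> ln x <= ln y.
Proof. move=> hx [hxy|->]; [left; apply: ln_increasing|]; lra. Qed.

Lemma Rinv_ge0 x : 0 <= x -> 0 <= / x.
Proof. case=> [h|<-]; [left; exact: Rinv_0_lt_compat | rewrite Rinv_0; lra]. Qed.

Section Ent.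
Variables (Om : finType) (P : Om -> R).
Hypothesis HP0 : forall w, 0 <= P w.
Hypothesis HP1 : \big[Rplus/0]_(w : Om) P w = 1.

Definition pr (U : eqType) (X : Om -> U) (w : Om) : R :=
  \big[Rplus/0]_(v : Om | X v == X w) P v.
Definition LK (U : eqType) (X : Om -> U) : R :=
  - \big[Rplus/0]_(w : Om) (P w * ln (pr X w)).

Lemma pr_ge (U : eqType) (X : Om -> U) w : P w <= pr X w.
Proof.
rewrite /pr (bigD1 w) //=; have := @sumR_ge0 Om (fun v => if (X v == X w) && (v != w) then P v else 0).
rewrite -big_mkcond /= => H; have : 0 <= \big[Rplus/0]_(i | (X i == X w) && (i != w)) P i.
  by apply: H => i; case: ifP => _; [exact: HP0|lra].
lra.
Qed.

Lemma pr_ge0 (U : eqType) (X : Om -> U) w : 0 <= pr X w.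
Proof. have := pr_ge X w; have := HP0 w; lra. Qed.

Lemma pr_sub (U V : eqType) (X : Om -> U) (Y : Om -> V) w :
  (forall v, X v == X w -> Y v == Y w) -> pr X w <= pr Y w.
Proof.
move=> H; rewrite /pr (big_mkcond (fun v => X v == X w)) (big_mkcond (fun v => Y v == Y w)).
apply: sumR_le => v; case: ifP => h1; first by rewrite (H _ h1); lra.
case: ifP => _; [exact: HP0 | lra].
Qed.

Lemma pr_val (U : eqType) (X : Om -> U) w w' : X w = X w' -> pr X w = pr X w'.
Proof. by rewrite /pr => ->. Qed.

Lemma LK_le (U V : eqType) (X : Om -> U) (Y : Om -> V) :
  (forall w v, X w == X v -> Y w == Y v) -> LK Y <= LK X.
Proof.
move=> H; rewrite /LK; apply: Ropp_le_contravar; apply: sumR_le => w.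
case: (HP0 w) => hw; last by rewrite -hw !Rmult_0_l; lra.
apply: Rmult_le_compat_l; first lra.
apply: ln_le_mono; first by have := pr_ge X w; lra.
by apply: pr_sub => v; apply: H.
Qed.

Lemma LK_eq (U V : eqType) (X : Om -> U) (Y : Om -> V) :
  (forall w v, (X w == X v) = (Y w == Y v)) -> LK X = LK Y.
Proof. move=> H; apply: Rle_antisym; apply: LK_le => w v; by rewrite H. Qed.

Lemma LK_const (U : eqType) (c : U) : LK (fun _ => c) = 0.
Proof.
rewrite /LK /pr big1; first lra.
move=> w _; rewrite (eq_bigl xpredT) ?eqxx //.
by rewrite HP1 ln_1 Rmult_0_r.
Qed.


Section Submod.
Variables (UA UB UC : eqType) (A : Om -> UA) (B : Om -> UB) (C : Om -> UC).
Let abc := fun w => ((A w, B w), C w).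
Let ac := fun w => (A w, C w).
Let bc := fun w => (B w, C w).
Let r w := pr ac w * pr bc w * / (pr abc w * pr C w).

Lemma K_pt u v :
  \big[Rplus/0]_(w : Om) (if (ac u == ac w) && (bc v == bc w)
       then P u * P v * (P w * / (pr abc w * pr C w)) else 0)
  <= (if C v == C u then P u * P v * / pr C u else 0).
Proof.
have hPu := HP0 u; have hPv := HP0 v; have hCu := pr_ge0 C u.
have hinv := Rinv_ge0 hCu.
case: (pickP (fun w => (ac u == ac w) && (bc v == bc w))) => [w0 /andP[h1 h2] | hn]; last first.
  rewrite big1; last by move=> w _; rewrite hn.
  case: ifP => _; last lra.
  apply: Rmult_le_pos => //; exact: Rmult_le_pos.
move: h1 h2; rewrite /ac /bc !xpair_eqE => /andP[/eqP hA1 /eqP hC1] /andP[/eqP hB2 /eqP hC2].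
have -> : C v == C u by rewrite hC1 hC2.
set K := P u * P v * / (pr abc w0 * pr C u).
have hab0 := pr_ge0 abc w0.
have hK : 0 <= K.
  apply: Rmult_le_pos; first exact: Rmult_le_pos.
  apply: Rinv_ge0; exact: Rmult_le_pos.
apply: Rle_trans (_ : \big[Rplus/0]_(w : Om) (if abc w == abc w0 then P w * K else 0) <= _).
  apply: sumR_le => w; case: ifP => hw; last first.
    case: ifP => _; last lra; apply: Rmult_le_pos => //.
  move: hw; rewrite /ac /bc !xpair_eqE => /andP[/andP[/eqP hA /eqP hC] /andP[/eqP hB _]].
  have habc : abc w = abc w0 by rewrite /abc -hA -hB -hC hA1 hB2 hC1.
  have -> : (A w == A w0) && (B w == B w0) && (C w == C w0).
    by rewrite -hA -hB -hC hA1 hB2 hC1 !eqxx.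
  rewrite (pr_val habc) (@pr_val _ C w u); last by rewrite -hC.
  rewrite /K; apply: Req_le; ring.
rewrite -big_mkcond -big_distrl /=.
change (pr abc w0 * K <= P u * P v * / pr C u).
rewrite /K Rinv_mult.
case: hab0 => h0; last by rewrite -h0 Rmult_0_l; apply: Rmult_le_pos => //; exact: Rmult_le_pos.
apply: Req_le.
transitivity ((pr abc w0 * / pr abc w0) * (P u * P v * / pr C u)); first ring.
rewrite Rinv_r; [ring | lra].
Qed.

Lemma K_pw w : P w * r w =
  \big[Rplus/0]_(u : Om) \big[Rplus/0]_(v : Om) (if (ac u == ac w) && (bc v == bc w)
       then P u * P v * (P w * / (pr abc w * pr C w)) else 0).
Proof.
rewrite /r; set M := P w * / (pr abc w * pr C w).
transitivity ((pr ac w * pr bc w) * M); first by rewrite /M; ring.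
rewrite /pr (big_mkcond (fun u => ac u == ac w)) (big_mkcond (fun v => bc v == bc w)).
rewrite big_distrlr big_distrl; apply: eq_bigr => u _.
rewrite big_distrl; apply: eq_bigr => v _.
by case: (ac u == ac w); case: (bc v == bc w) => /=; ring.
Qed.

Lemma K_sum : \big[Rplus/0]_(w : Om) (P w * r w) <= \big[Rplus/0]_(w : Om) P w.
Proof.
under eq_bigr do rewrite K_pw.
rewrite exchange_big /=.
under eq_bigr do rewrite exchange_big /=.
apply: sumR_le => u.
apply: Rle_trans (_ : \big[Rplus/0]_(v : Om) (if C v == C u then P u * P v * / pr C u else 0) <= _).
  by apply: sumR_le => v; apply: K_pt.
rewrite -big_mkcond -big_distrl -big_distrr /=.
change (P u * pr C u * / pr C u <= P u).
have := pr_ge C u; have := HP0 u => h1 h2.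
case: (Req_dec (pr C u) 0) => h.
  by rewrite h Rinv_0 Rmult_0_r; lra.
apply: Req_le; field; lra.
Qed.

Lemma submod : LK abc + LK C <= LK ac + LK bc.
Proof.
rewrite /LK.
have H1 : \big[Rplus/0]_(w : Om) (P w * ln (pr ac w) + P w * ln (pr bc w)) <=
   \big[Rplus/0]_(w : Om) ((P w * ln (pr abc w) + P w * ln (pr C w)) + (P w * r w + - P w)).
  apply: sumR_le => w; case: (HP0 w) => hw; last by rewrite -hw; lra.
  have ha := pr_ge ac w; have hb := pr_ge bc w; have hab := pr_ge abc w; have hc := pr_ge C w.
  have hr : 0 < r w.
    apply: Rmult_lt_0_compat; first (apply: Rmult_lt_0_compat; lra).
    apply: Rinv_0_lt_compat; apply: Rmult_lt_0_compat; lra.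
  have hl : ln (r w) = ln (pr ac w) + ln (pr bc w) - ln (pr abc w) - ln (pr C w).
    rewrite /r ln_mult; try lra.
    - rewrite ln_mult; try lra. rewrite ln_Rinv; last (apply: Rmult_lt_0_compat; lra).
      rewrite ln_mult; lra.
    - apply: Rmult_lt_0_compat; lra.
    - apply: Rinv_0_lt_compat; apply: Rmult_lt_0_compat; lra.
  have := ln_le_sub1 hr; rewrite hl => H.
  have := Rmult_le_compat_l (P w) _ _ (Rlt_le _ _ hw) H.
  lra.
rewrite !big_split /= sumR_N in H1.
have := K_sum.
lra.
Qed.

End Submod.

Definition pk (U V : eqType) (X : Om -> U) (Y : Om -> V) := fun w => (X w, Y w).

Lemma LK_pair_ge (U V : eqType) (X : Om -> U) (Y : Om -> V) : LK X <= LK (pk X Y).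
Proof. apply: LK_le => w v; rewrite /pk xpair_eqE => /andP[]. by []. Qed.

Lemma LK_pair_ge2 (U V : eqType) (X : Om -> U) (Y : Om -> V) : LK Y <= LK (pk X Y).
Proof. apply: LK_le => w v; rewrite /pk xpair_eqE => /andP[]. by []. Qed.

Lemma LK_pairC (U V : eqType) (X : Om -> U) (Y : Om -> V) : LK (pk X Y) = LK (pk Y X).
Proof. apply: LK_eq => w v; rewrite /pk !xpair_eqE; exact: andbC. Qed.

Lemma LK_sub (U V : eqType) (X : Om -> U) (Y : Om -> V) : LK (pk X Y) <= LK X + LK Y.
Proof.
have := submod X Y (fun _ => tt).
rewrite LK_const.
rewrite (@LK_eq _ _ (fun w => (X w, Y w, tt)) (pk X Y)); last by move=> w v; rewrite /pk !xpair_eqE andbT.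
rewrite (@LK_eq _ _ (fun w => (X w, tt)) X); last by move=> w v; rewrite !xpair_eqE andbT.
rewrite (@LK_eq _ _ (fun w => (Y w, tt)) Y); last by move=> w v; rewrite !xpair_eqE andbT.
lra.
Qed.

Lemma LK_cond (UA UZ UZ' : eqType) (A : Om -> UA) (Z : Om -> UZ) (Z' : Om -> UZ') :
  (forall w v, Z w == Z v -> Z' w == Z' v) ->
  LK (pk A Z) - LK Z <= LK (pk A Z') - LK Z'.
Proof.
move=> H; have := submod A Z Z'.
rewrite (@LK_eq _ _ (fun w => (A w, Z w, Z' w)) (pk A Z)); last first.
  move=> w v; rewrite /pk !xpair_eqE; case E: (Z w == Z v); last by rewrite andbF.
  by rewrite (H _ _ E) andbT.
rewrite (@LK_eq _ _ (fun w => (Z w, Z' w)) Z); last first.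
  move=> w v; rewrite !xpair_eqE; case E: (Z w == Z v) => //=.
  by rewrite (H _ _ E).
rewrite /pk; lra.
Qed.

Lemma LK_DP (UA UB UZ : eqType) (A : Om -> UA) (B : Om -> UB) (Z : Om -> UZ) :
  LK (pk A B) = LK B ->
  (forall w v, Z w == Z v -> B w == B v) ->
  LK (pk A Z) = LK Z.
Proof.
move=> H1 H2; apply: Rle_antisym; last exact: LK_pair_ge2.
have := LK_cond A H2; rewrite H1; lra.
Qed.

Definition mk (I : Type) (U : eqType) (f : I -> Om -> U) (s : seq I) : Om -> seq U :=
  fun w => [seq f i w | i <- s].

Lemma mk_eq (I : Type) (U : eqType) (f : I -> Om -> U) s w v :
  (mk f s w == mk f s v) = all (fun i => f i w == f i v) s.
Proof. rewrite /mk; elim: s => //= i s IH; by rewrite eqseq_cons IH. Qed.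

Lemma LK_mk_bound (I : Type) (U : eqType) (f : I -> Om -> U) s b :
  (forall i, List.In i s -> LK (f i) <= b) -> LK (mk f s) <= INR (size s) * b.
Proof.
elim: s => [|i s IH] H.
  rewrite /= Rmult_0_l (@LK_eq _ _ _ (fun _ => tt)) ?LK_const; first lra.
  by move=> w v; rewrite !eqxx.
rewrite (@LK_eq _ _ _ (pk (f i) (mk f s))); last first.
  by move=> w v; rewrite /pk xpair_eqE !mk_eq.
have := LK_sub (f i) (mk f s).
have := IH (fun j hj => H j (List.in_cons _ _ _ hj)).
have := H i (List.in_eq _ _).
change (size (i :: s)) with ((size s).+1); rewrite S_INR; lra.
Qed.

Lemma LK_mk_DP (I : Type) (U V W : eqType) (f : I -> Om -> U) (Y : I -> Om -> V)
   (Z : Om -> W) s :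
  (forall i, List.In i s -> LK (pk (f i) (Y i)) = LK (Y i) /\
      forall w v, Z w == Z v -> Y i w == Y i v) ->
  LK (pk (mk f s) Z) = LK Z.
Proof.
elim: s => [|i s IH] H.
  by apply: LK_eq => w v; rewrite /pk xpair_eqE mk_eq.
rewrite (@LK_eq _ _ _ (pk (f i) (pk (mk f s) Z))); last first.
  by move=> w v; rewrite /pk !xpair_eqE !mk_eq /= andbA.
have [h1 h2] := H i (List.in_eq _ _).
rewrite (LK_DP h1); first exact: IH (fun j hj => H j (List.in_cons _ _ _ hj)).
by move=> w v; rewrite /pk xpair_eqE => /andP[_ /h2].
Qed.

Lemma In_mem (T : eqType) (x : T) s : List.In x s -> x \in s.
Proof. elim: s => //= y s IH [->|h]; rewrite inE ?eqxx //; by rewrite IH ?orbT. Qed.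

Lemma b3 (x y z : bool) : x && (y && z) = z && (x && y).
Proof. by case: x; case: y; case: z. Qed.

Section Chain.
Variables (US V : eqType) (S : Om -> US) (n d k l : nat)
  (C : nat -> Om -> V) (M : nat -> nat -> Om -> V) (a b : R).
Let helpers i := iota n i ++ iota i.+1 (d - i).
Let D i := mk (M i) (helpers i).
Let X := mk D (iota 0 l).
Let Cm m := mk C (iota 0 m).
Hypotheses (hlk : (l < k)%nat) (hkd : (k <= d)%nat).
Hypothesis hC : forall i, (i < k)%nat -> LK (C i) <= a.
Hypothesis hM : forall i j, (i < k)%nat -> j \in helpers i -> LK (M i j) <= b.
Hypothesis hMC : forall i i', (i < k)%nat -> (i' < i)%nat ->
  LK (pk (M i (n + i')) (C i')) = LK (C i').
Hypothesis hCD : forall i, (i < k)%nat -> LK (pk (C i) (D i)) = LK (D i).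
Hypothesis hrec : LK (pk S (Cm k)) = LK (Cm k).
Hypothesis hsec : LK (pk S X) - LK X = LK S.

Lemma step0 : LK S <= LK (pk X (Cm k)) - LK X.
Proof.
have h1 := submod S X (Cm k).
have h2 : LK (pk S X) <= LK (fun w => ((S w, X w), Cm k w)).
  by apply: LK_le => w v; rewrite /pk !xpair_eqE => /andP[].
move: hrec hsec h1 h2; rewrite /pk.
set t1 := LK (fun w => (S w, Cm k w)).
set t2 := LK (fun w => (S w, X w)).
set t3 := LK (fun w => ((S w, X w), Cm k w)).
set t4 := LK (fun w => (X w, Cm k w)).
set t5 := LK X. set t6 := LK (Cm k). set t7 := LK S.
clearbody t1 t2 t3 t4 t5 t6 t7; lra.
Qed.

Lemma Cm_S (U : eqType) (Z : Om -> U) m :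
  LK (pk Z (Cm m.+1)) = LK (pk (C m) (pk Z (Cm m))).
Proof.
apply: LK_eq => w v; rewrite /pk /Cm !xpair_eqE !mk_eq -addn1 iotaD all_cat /= andbT.
exact: b3.
Qed.

Lemma step1 m : (m <= l)%nat -> LK (pk X (Cm m)) = LK X.
Proof.
elim: m => [|m IH] hm.
  by apply: LK_eq => w v; rewrite /pk /Cm xpair_eqE mk_eq /= andbT.
rewrite Cm_S (LK_DP (hCD _)); first by apply: IH; exact: ltnW.
  exact: ltn_trans hm hlk.
move=> w v; rewrite /pk xpair_eqE => /andP[]; rewrite /X mk_eq => /allP H _.
by apply: H; rewrite mem_iota.
Qed.

Lemma inc_a (U : eqType) (Z : Om -> U) m : (m < k)%nat ->
  LK (pk (C m) Z) - LK Z <= a.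
Proof. move=> hm; have := LK_sub (C m) Z; have := hC hm; lra. Qed.

Lemma inc_b m : (m < k)%nat ->
  LK (pk (C m) (pk X (Cm m))) - LK (pk X (Cm m)) <= INR (d - m) * b.
Proof.
move=> hm.
have h1 := @LK_cond _ _ _ (C m) (pk X (Cm m)) (Cm m).
have {h1} h1 : LK (pk (C m) (pk X (Cm m))) - LK (pk X (Cm m)) <=
    LK (pk (C m) (Cm m)) - LK (Cm m).
  by apply: h1 => w v; rewrite /pk xpair_eqE => /andP[].
have h2 : LK (pk (C m) (Cm m)) <= LK (pk (D m) (Cm m)).
  apply: Rle_trans (_ : LK (pk (C m) (pk (D m) (Cm m))) <= _).
    by apply: LK_le => w v; rewrite /pk !xpair_eqE => /andP[-> /andP[]].
  apply: Req_le; apply: (LK_DP (hCD hm)).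
  by move=> w v; rewrite /pk xpair_eqE => /andP[].
set Mc := mk (M m) (iota n m).
set Mo := mk (M m) (iota m.+1 (d - m)).
have h3 : LK (pk (D m) (Cm m)) = LK (pk Mc (pk Mo (Cm m))).
  apply: LK_eq => w v; rewrite /pk !xpair_eqE /D /Mc /Mo !mk_eq /helpers all_cat.
  by rewrite andbA.
have h4 : LK (pk Mc (pk Mo (Cm m))) = LK (pk Mo (Cm m)).
  apply: (@LK_mk_DP _ _ _ _ _ (fun j => C (j - n))) => j /In_mem hj.
  move: hj; rewrite mem_iota => /andP[hj1 hj2].
  split.
    have := hMC hm (_ : (j - n < m)%nat).
    rewrite subnKC //; apply; by rewrite ltn_subLR.
  move=> w v; rewrite /pk xpair_eqE => /andP[_]; rewrite /Cm mk_eq => /allP; apply.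
  by rewrite mem_iota /= ltn_subLR.
have h5 := LK_sub Mo (Cm m).
have h6 : LK Mo <= INR (d - m) * b.
  rewrite -(size_iota m.+1 (d - m)); apply: LK_mk_bound => j /In_mem hj.
  by apply: hM => //; rewrite /helpers mem_cat hj orbT.
lra.
Qed.

Lemma step2 m : (l <= m)%nat -> (m <= k)%nat ->
  LK (pk X (Cm m)) - LK X <= \big[Rplus/0]_(l <= i < m) Rmin (INR (d - i) * b) a.
Proof.
elim: m => [|m IH] h1 h2.
  by rewrite big_geq // step1 //; lra.
case: (ltnP m l) => hml.
  have hl : l = m.+1 by apply/eqP; rewrite eqn_leq h1 hml.
  by rewrite big_geq ?hl // step1 ?hl //; lra.
rewrite big_nat_recr //= Cm_S.
have := IH hml (ltnW h2).
have := Rmin_glb _ _ _ (inc_b h2) (inc_a (pk X (Cm m)) h2).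
lra.
Qed.

Lemma main_chain : LK S <= \big[Rplus/0]_(l <= i < k) Rmin (INR (d - i) * b) a.
Proof. have := step0; have := step2 (ltnW hlk) (leqnn k); lra. Qed.

End Chain.

End Ent.
From Stdlib Require Import Lia.
Ltac natl := repeat match goal with
  | H : is_true (leq _ _) |- _ => move/leP: H => H
  | H : is_true (~~ (leq _ _)) |- _ => move/negP: H => H
  | H : ~ (is_true (leq _ _)) |- _ => let H' := fresh in have H' := (fun h => H (introT leP h)); clear H
  | |- is_true (leq _ _) => apply/leP
  | |- is_true (~~ (leq _ _)) => apply/negP; move/leP
  | |- ~ (is_true (leq _ _)) => move/leP
  | H : context [addn] |- _ => rewrite addnE in H
  | H : context [subn] |- _ => rewrite subnE in H
  | |- context [addn] => rewrite addnE
  | |- context [subn] => rewrite subnE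
  end; lia.

Section Hist.
Variables (n d k : nat).
Hypotheses (hkd : (k <= d)%nat) (hdn : (d <= n - 1)%nat).

Definition ev (i : nat) : event := (i, iota n i ++ iota i.+1 (d - i)).
Definition hist (m : nat) : seq event := map ev (iota 0 m).
Definition Aset (t : nat) : seq nat := iota t (n - t) ++ iota n t.

Lemma size_hist m : size (hist m) = m.
Proof. by rewrite size_map size_iota. Qed.

Lemma take_hist j m : (j <= m)%nat -> take j (hist m) = hist j.
Proof. by move=> h; rewrite /hist -map_take take_iota (minn_idPl h). Qed.

Lemma nth_hist j m : (j < m)%nat -> nth dflt_event (hist m) j = ev j.
Proof. by move=> h; rewrite /hist (nth_map 0%nat) ?size_iota // nth_iota. Qed.

Lemma rcons_hist m : rcons (hist m) (ev m) = hist m.+1.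
Proof. by rewrite /hist -addn1 iotaD map_cat cats1. Qed.

Lemma valid_ev t : (t < k)%nat -> valid_event d (Aset t) (ev t).
Proof.
have hkd0 := hkd; have hdn0 := hdn.
move=> ht; rewrite /valid_event /=; apply/and5P; split.
- rewrite mem_cat !mem_iota; apply/orP; left; apply/andP; split; natl.
- rewrite cat_uniq !iota_uniq /= andbT; apply/hasPn => x; rewrite mem_iota => /andP[h1 h2].
  rewrite /= mem_iota; apply/negP => /andP[h3 h4]; natl.
- rewrite size_cat !size_iota; apply/eqP; natl.
- apply/allP => x; rewrite mem_cat !mem_iota => /orP[/andP[h1 h2]|/andP[h1 h2]];
  rewrite mem_cat !mem_iota; apply/orP; [right|left]; apply/andP; split; natl.
- rewrite mem_cat !mem_iota negb_or; apply/andP; split; apply/negP => /andP[h1 h2]; natl.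
Qed.

Lemma step_A t : (t < n)%nat ->
  rcons (filter (fun j => j != t) (Aset t)) (n + t)%nat = Aset t.+1.
Proof.
have hkd0 := hkd; have hdn0 := hdn.
move=> ht; rewrite /Aset (_ : (n - t = (n - t.+1).+1)%nat); last by natl.
rewrite /= eqxx /=.
have -> : filter (fun j => j != t) (iota t.+1 (n - t.+1) ++ iota n t) =
          iota t.+1 (n - t.+1) ++ iota n t.
  apply/all_filterP; apply/allP => x; rewrite mem_cat !mem_iota => /orP[/andP[h1 h2]|/andP[h1 h2]];
  apply/negP => /eqP hx; subst x; natl.
rewrite rcons_cat -cats1; change [:: (n + t)%nat] with (iota (n + t) 1).
by rewrite -iotaD addn1.
Qed.

Lemma valid_gen r t : (t + r <= k)%nat ->
  valid_from n d (Aset t) t (map ev (iota t r)) &&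
  (active_from n (Aset t) t (map ev (iota t r)) == Aset (t + r)).
Proof.
have hkd0 := hkd; have hdn0 := hdn.
elim: r t => [|r IH] t h; first by rewrite /= addn0 eqxx.
rewrite /= valid_ev; last by natl.
rewrite step_A; last by natl.
by rewrite -addSnnS IH // addSnnS.
Qed.

Lemma Aset0 : Aset 0 = iota 0 n.
Proof. by rewrite /Aset subn0 cats0. Qed.

Lemma valid_hist m : (m <= k)%nat -> valid_history n d (hist m).
Proof.
move=> h; have /andP[H _] := @valid_gen m 0 h.
by rewrite /valid_history -Aset0.
Qed.

Lemma active_hist : active n (hist k) = Aset k.
Proof.
have /andP[_ /eqP H] := @valid_gen k 0 (leqnn k).
by rewrite /active -Aset0.
Qed.

End Hist.

Lemma LK_ext (Om : finType) (P : Om -> R) (U : eqType) (X Y : Om -> U) :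
  (forall w, X w = Y w) -> LK P X = LK P Y.
Proof.
move=> H; rewrite /LK /pr; congr (- _); apply: eq_bigr => w _.
congr (_ * ln _); apply: eq_bigl => v; by rewrite !H.
Qed.

Lemma ent_LK (Om : finType) (P : Om -> R) (U : eqType) (X : Om -> U) q :
  entropy q P X = LK P X / ln q.
Proof.
rewrite /entropy /LK /Rdiv.
have -> : forall a b : R, - a * b = - (a * b) by move=> *; ring.
rewrite big_distrl /=; congr (- _); apply: eq_bigr => w _.
rewrite /pr /prob /Rdiv; ring.
Qed.

Lemma ce0 (Om : finType) (P : Om -> R) (U V : eqType) (X : Om -> U) (Y : Om -> V) q :
  0 < ln q -> cond_entropy q P X Y = 0 -> LK P (pk X Y) = LK P Y.
Proof.
move=> hq; rewrite /cond_entropy !ent_LK => h.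
have h2 : (LK P (pairRV X Y) - LK P Y) * / ln q = 0 by rewrite -h /Rdiv; ring.
case: (Rmult_integral _ _ h2) => h3.
  change (LK P (pairRV X Y) = LK P Y); lra.
have := Rinv_neq_0_compat (ln q); lra.
Qed.

Lemma ent_le (Om : finType) (P : Om -> R) (U : eqType) (X : Om -> U) q t :
  0 < ln q -> entropy q P X <= t -> LK P X <= t * ln q.
Proof.
move=> hq; rewrite ent_LK => h.
have -> : LK P X = LK P X / ln q * ln q by field; lra.
apply: Rmult_le_compat_r; lra.
Qed.

Lemma cnode_hist (F : finFieldType) n d (sc : scheme F) j m : (j < m)%nat ->
  Cnode n sc (hist n d m) (n + j)%nat = Cnew sc (hist n d j) (ev n d j).
Proof.
move=> h; rewrite /Cnode.
have -> : ltn (n + j)%nat n = false by rewrite /ltn /= ltnNge leq_addr.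
by rewrite addKn take_hist ?nth_hist // ltnW.
Qed.

Lemma dnode_hist (F : finFieldType) n d (sc : scheme F) j m : (j < m)%nat ->
  Dnode n sc (hist n d m) (n + j)%nat =
  (fun w => [seq msg sc (hist n d j) (ev n d j) jj w | jj <- (ev n d j).2]).
Proof.
move=> h; rewrite /Dnode.
have -> : ltn (n + j)%nat n = false by rewrite /ltn /= ltnNge leq_addr.
by rewrite addKn take_hist ?nth_hist // ltnW.
Qed.

Lemma Rmin_scale x a b c : 0 < c -> Rmin (x * (b * c)) (a * c) = c * Rmin (x * b) a.
Proof.
move=> hc; rewrite /Rmin.
case: (Rle_dec (x * (b * c)) (a * c)); case: (Rle_dec (x * b) a) => h1 h2; try nra.
Qed.

Unset Implicit Arguments.

Theorem theorem1 (F : finFieldType) (n k d l : nat) (alpha gamma : R)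
    (hkd : leq k d) (hdn : leq d (n - 1)%nat) (hlk : ltn l k)
    (sc : scheme F) :
    secure_dss n k d l alpha (gamma / INR d) sc ->
    entropy (INR #|F|) (P sc) (S sc) <= secrecy_bound k d l alpha (gamma / INR d).
Proof.
rewrite /secure_dss; cbv zeta.
case=> HP0 [HP1 [_ [_ [Hrep [Hrec Hsec]]]]].
set q := INR #|F|.
set beta := gamma / INR d.
have hq1 : 1 < q.
  rewrite /q -[1]/(INR 1); apply: lt_INR; apply/ltP; exact: card_finNzRing_gt1.
have hq : 0 < ln q by rewrite -ln_1; apply: ln_increasing; lra.
have hkd0 := hkd; have hdn0 := hdn; have hlk0 := hlk.
pose C i := Cnew sc (hist n d i) (ev n d i).
pose M i j := msg sc (hist n d i) (ev n d i) j.
have HR : forall i, (i < k)%nat ->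
   (forall j, j \in (ev n d i).2 ->
      entropy q (P sc) (M i j) <= beta /\
      cond_entropy q (P sc) (M i j) (Cnode n sc (hist n d i) j) = 0) /\
   entropy q (P sc) (C i) <= alpha /\
   cond_entropy q (P sc) (C i) (Dnode n sc (hist n d i.+1) (n + i)) = 0.
  move=> i hi; have := Hrep (hist n d i) (ev n d i).
  rewrite rcons_hist size_hist; apply; exact: (valid_hist hkd hdn hi).
have hLK : LK (P sc) (S sc) <=
    \big[Rplus/0]_(l <= i < k) Rmin (INR (d - i) * (beta * ln q)) (alpha * ln q).
  apply: (@main_chain _ _ HP0 HP1 _ _ (S sc) n d k l C M) => //.
  - move=> i hi; have [_ [h _]] := HR i hi; exact: ent_le.
  - move=> i j hi hj; have [h _] := HR i hi; have [h1 _] := h j hj; exact: ent_le.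
  - move=> i i' hi hi'; have [h _] := HR i hi.
    have hmem : ((n + i')%nat \in (ev n d i).2).
      by rewrite /= mem_cat mem_iota leq_addr ltn_add2l hi'.
    have [_ h2] := h (n + i')%nat hmem.
    by rewrite (cnode_hist _ _ _ hi') in h2; exact: ce0 h2.
  - move=> i hi; have [_ [_ h]] := HR i hi.
    by rewrite (dnode_hist _ _ _ (ltnSn i)) in h; exact: ce0 h.
  - have h := Hrec (hist n d k) (iota n k) (valid_hist hkd hdn (leqnn k)) (iota_uniq _ _) (size_iota _ _).
    have {h} h : cond_entropy q (P sc) (S sc) (Cset n sc (hist n d k) (iota n k)) = 0.
      apply: h; rewrite active_hist //; apply/allP => x hx.
      by rewrite /Aset mem_cat hx orbT.
    have h2 := ce0 hq h.
    have E : forall w, Cset n sc (hist n d k) (iota n k) w = mk C (iota 0 k) w.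
      move=> w; rewrite /Cset /mk (_ : iota n k = map (addn n) (iota 0 k)); last by rewrite -iotaDl addn0.
      rewrite -map_comp; apply/eq_in_map => j.
      by rewrite mem_iota /= => hj; rewrite (cnode_hist _ _ _ hj).
    rewrite -(LK_ext (P sc) E) -h2; apply: LK_ext => w /=; by rewrite /pk E.
  - have h := Hsec (hist n d k) (iota n l) (valid_hist hkd hdn (leqnn k)).
    rewrite size_iota leqnn size_hist in h.
    have {h} h : cond_entropy q (P sc) (S sc) (Dset n sc (hist n d k) (iota n l)) = entropy q (P sc) (S sc).
      apply: h => //; apply/allP => x; rewrite !mem_iota => /andP[h1 h2]; rewrite /ltn /=.
      by apply: leq_trans h2 _; rewrite leq_add2l ltnW.
    move: h; rewrite /cond_entropy !ent_LK => h.
    have E : forall w, Dset n sc (hist n d k) (iota n l) w =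
       mk (fun i => mk (M i) (iota n i ++ iota i.+1 (d - i))) (iota 0 l) w.
      move=> w; rewrite /Dset /mk (_ : iota n l = map (addn n) (iota 0 l)); last by rewrite -iotaDl addn0.
      rewrite -map_comp; apply/eq_in_map => j.
      rewrite mem_iota /= => hj; rewrite (dnode_hist _ _ _ (_ : (j < k)%nat)) //.
      exact: ltn_trans hj hlk.
    rewrite -(LK_ext (P sc) E).
    have -> : LK (P sc) (pk (S sc) (mk (fun i => mk (M i) (iota n i ++ iota i.+1 (d - i))) (iota 0 l))) =
              LK (P sc) (pairRV (S sc) (Dset n sc (hist n d k) (iota n l))).
      by apply: LK_ext => w; rewrite /pk /pairRV E.
    have hne : ln q <> 0 by lra.
    have := f_equal (fun x => x * ln q) h; rewrite /Rdiv.
    set a1 := LK _ (pairRV _ _); set a2 := LK _ (Dset _ _ _ _); set a3 := LK _ (S sc).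
    move=> h'; have : (a1 - a2) = a3.
      transitivity ((a1 * / ln q - a2 * / ln q) * ln q); first by field; exact: hne.
      rewrite h'; field; exact: hne.
    move=> Hx; exact Hx.
rewrite ent_LK /secrecy_bound big_add1 /=.
have -> : \big[Rplus/0]_(l <= i < k) Rmin (INR (d - i.+1 + 1) * beta) alpha =
          \big[Rplus/0]_(l <= i < k) Rmin (INR (d - i) * beta) alpha.
  apply: eq_big_nat => i /andP[h1 h2]; congr (Rmin (INR _ * _) _); natl.
have E2 : \big[Rplus/0]_(l <= i < k) Rmin (INR (d - i) * (beta * ln q)) (alpha * ln q) =
     ln q * \big[Rplus/0]_(l <= i < k) Rmin (INR (d - i) * beta) alpha.
  rewrite big_distrr /=; apply: eq_bigr => i _; exact: Rmin_scale.
rewrite E2 in hLK.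
apply: (Rmult_le_reg_r (ln q)) => //.
have -> : LK (P sc) (S sc) / ln q * ln q = LK (P sc) (S sc) by field; lra.
move: hLK; set T := \big[Rplus/0]_(l <= i < k) _; move=> hLK; lra.
Qed.
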